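(* Let $L$ be the smallest unimodal normal logic containing $p\to\Diamond p$, $\Diamond\Diamond\Diamond p\to\Diamond\Diamond p$ and $\Box\Box\Diamond\Diamond p\to\Diamond\Diamond\Box\Box p$. Then $L[1]=\mathbf K+(p\leftrightarrow\Box p)$ (in particular $L[1]$ is locally tabular), while $L[2]$ is not $1$-tabular.
   Context: Unimodal formulas over $p_0,p_1,\dots$ with $\to,\bot,\Diamond$; $\Box=\neg\Diamond\neg$. $\mathbf K$ is the smallest normal modal logic; $\mathbf K+\Psi$ the smallest normal logic containing $\Psi$. For this reflexive $2$-transitive logic, $\Diamond^*\varphi$ denotes $\Diamond\Diamond\varphi$ (equivalently $\varphi\vee\Diamond\varphi\vee\Diamond\Diamond\varphi$) and $\Box^*=\neg\Diamond^*\neg$. $B_0=\bot$, $B_{i+1}=p_{i+1}\to\Box^*(\Diamond^*p_{i+1}\vee B_i)$; $L[h]=L+B_h$. A logic is $k$-tabular if there are only finitely many formulas in $p_0,\dots,p_{k-1}$ up to provable equivalence in it; locally tabular if $k$-tabular for all finite $k$. *)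

(* Defs.v *)
From Stdlib Require Import List.
Import ListNotations.

Inductive form : Type :=
| Var : nat -> form
| Bot : form
| Imp : form -> form -> form
| Dia : form -> form.

Definition Neg (a : form) : form := Imp a Bot.
Definition Top : form := Neg Bot.
Definition Or (a b : form) : form := Imp (Neg a) b.
Definition And (a b : form) : form := Neg (Imp a (Neg b)).
Definition Iff (a b : form) : form := And (Imp a b) (Imp b a).
Definition Box (a : form) : form := Neg (Dia (Neg a)).

Fixpoint subst (s : nat -> form) (a : form) : form :=
  match a with
  | Var n => s n
  | Bot => Bot
  | Imp a b => Imp (subst s a) (subst s b)
  | Dia a => Dia (subst s a)
  end.

Definition p (n : nat) : form := Var n.

(* K + Psi : the smallest normal modal logic containing the set Psi.
   Modal part: the K axiom for Box with necessitation, plus the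
   usual Diamond axioms/rule (all valid in every Kripke frame), closed
   under MP and uniform substitution. *)
Inductive thm (Psi : form -> Prop) : form -> Prop :=
| ax_extra : forall a, Psi a -> thm Psi a
| ax_A1 : forall a b, thm Psi (Imp a (Imp b a))
| ax_A2 : forall a b c,
    thm Psi (Imp (Imp a (Imp b c)) (Imp (Imp a b) (Imp a c)))
| ax_A3 : forall a, thm Psi (Imp (Neg (Neg a)) a)
| ax_K : forall a b, thm Psi (Imp (Box (Imp a b)) (Imp (Box a) (Box b)))
| ax_Dbot : thm Psi (Neg (Dia Bot))
| ax_Dor : forall a b, thm Psi (Imp (Dia (Or a b)) (Or (Dia a) (Dia b)))
| r_MP : forall a b, thm Psi (Imp a b) -> thm Psi a -> thm Psi b
| r_Nec : forall a, thm Psi a -> thm Psi (Box a)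
| r_DMon : forall a b, thm Psi (Imp a b) -> thm Psi (Imp (Dia a) (Dia b))
| r_US : forall s a, thm Psi a -> thm Psi (subst s a).

Definition L_axioms (a : form) : Prop :=
  a = Imp (p 0) (Dia (p 0)) \/
  a = Imp (Dia (Dia (Dia (p 0)))) (Dia (Dia (p 0))) \/
  a = Imp (Box (Box (Dia (Dia (p 0))))) (Dia (Dia (Box (Box (p 0))))).

(* For this reflexive 2-transitive logic: Dia* a := Dia Dia a. *)
Definition DiaS (a : form) : form := Dia (Dia a).
Definition BoxS (a : form) : form := Neg (DiaS (Neg a)).

Fixpoint B (i : nat) : form :=
  match i with
  | 0 => Bot
  | S j => Imp (p (S j)) (BoxS (Or (DiaS (p (S j))) (B j)))
  end.

Definition L_h_axioms (h : nat) (a : form) : Prop := L_axioms a \/ a = B h.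

Fixpoint vars_below (k : nat) (a : form) : Prop :=
  match a with
  | Var n => n < k
  | Bot => True
  | Imp a b => vars_below k a /\ vars_below k b
  | Dia a => vars_below k a
  end.

Definition k_tabular (Psi : form -> Prop) (k : nat) : Prop :=
  exists reps : list form,
    forall a, vars_below k a ->
      exists b, In b reps /\ thm Psi (Iff a b).

Definition locally_tabular (Psi : form -> Prop) : Prop :=
  forall k, k_tabular Psi k.

Definition same_logic (Psi1 Psi2 : form -> Prop) : Prop :=
  forall a, thm Psi1 a <-> thm Psi2 a.

Definition K1_axioms (a : form) : Prop := a = Iff (p 0) (Box (p 0)).

(* Main.v *)
Require Import Defs.
From Stdlib Require Import List Arith Lia Bool Classical.
Import ListNotations.

Fixpoint dia_free (a : form) : Prop :=
  match a with
  | Dia _ => False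
  | Imp a b => dia_free a /\ dia_free b
  | _ => True
  end.

Fixpoint eval (v : nat -> bool) (a : form) : bool :=
  match a with
  | Var n => v n
  | Bot => false
  | Imp a b => implb (eval v a) (eval v b)
  | Dia _ => false
  end.

Fixpoint maxv (a : form) : nat :=
  match a with
  | Var n => S n
  | Imp a b => max (maxv a) (maxv b)
  | _ => 0
  end.

Inductive pr (Psi : form -> Prop) (G : list form) : form -> Prop :=
| pr_hyp : forall a, In a G -> pr Psi G a
| pr_thm : forall a, thm Psi a -> pr Psi G a
| pr_mp : forall a b, pr Psi G (Imp a b) -> pr Psi G a -> pr Psi G b.

Lemma thm_I Psi a : thm Psi (Imp a a).
Proof.
  eapply r_MP; [eapply r_MP; [apply (ax_A2 Psi a (Imp a a) a) | apply ax_A1] | apply (ax_A1 Psi a a)].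
Qed.

Lemma deduction Psi G g a : pr Psi (g :: G) a -> pr Psi G (Imp g a).
Proof.
  induction 1 as [a Ha|a Ha|a b _ IH1 _ IH2].
  - destruct Ha as [<-|Ha].
    + apply pr_thm, thm_I.
    + eapply pr_mp; [apply pr_thm, ax_A1| now apply pr_hyp].
  - eapply pr_mp; [apply pr_thm, ax_A1| now apply pr_thm].
  - eapply pr_mp; [eapply pr_mp; [apply pr_thm, ax_A2 | exact IH1] | exact IH2].
Qed.

Lemma pr_weaken Psi G G' a : pr Psi G a -> (forall x, In x G -> In x G') -> pr Psi G' a.
Proof.
  induction 1; intros.
  - apply pr_hyp; auto.
  - now apply pr_thm.
  - eapply pr_mp; eauto.
Qed.

Lemma pr_nil Psi a : pr Psi [] a -> thm Psi a.
Proof.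
  induction 1.
  - destruct H.
  - auto.
  - eapply r_MP; eauto.
Qed.

Definition lit (v : nat -> bool) (n : nat) : form :=
  if v n then Var n else Neg (Var n).

Fixpoint ctx (v : nat -> bool) (k : nat) : list form :=
  match k with
  | 0 => []
  | S j => lit v j :: ctx v j
  end.

Lemma In_ctx v k n : n < k -> In (lit v n) (ctx v k).
Proof.
  induction k; simpl; intros; [lia|].
  destruct (Nat.eq_dec n k); [subst; now left | right; apply IHk; lia].
Qed.

Lemma pr_efq Psi G b : pr Psi G Bot -> pr Psi G b.
Proof.
  intro H.
  eapply pr_mp; [apply pr_thm, ax_A3|].
  eapply pr_mp; [apply pr_thm, (ax_A1 Psi Bot (Neg b)) | exact H].
Qed.

Lemma kalmar Psi t k v : dia_free t -> maxv t <= k ->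
  pr Psi (ctx v k) (if eval v t then t else Neg t).
Proof.
  induction t as [n| |a IHa b IHb|a IHa]; simpl; intros Hd Hm.
  - apply pr_hyp. pose proof (In_ctx v k n ltac:(lia)) as H. unfold lit in H.
    destruct (v n); exact H.
  - apply pr_thm, thm_I.
  - destruct Hd as [Hda Hdb].
    specialize (IHa Hda ltac:(lia)). specialize (IHb Hdb ltac:(lia)).
    destruct (eval v a), (eval v b); simpl.
    + eapply pr_mp; [apply pr_thm, ax_A1 | exact IHb].
    + apply deduction.
      eapply pr_mp; [apply pr_weaken with (1 := IHb); simpl; auto|].
      eapply pr_mp; [apply pr_hyp; now left|].
      apply pr_weaken with (1 := IHa); simpl; auto.
    + eapply pr_mp; [apply pr_thm, ax_A1 | exact IHb].
    + apply deduction. apply pr_efq.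
      eapply pr_mp; [apply pr_weaken with (1 := IHa); simpl; auto|].
      apply pr_hyp; now left.
  - destruct Hd.
Qed.

Lemma pr_elim Psi G n t : pr Psi (Var n :: G) t -> pr Psi (Neg (Var n) :: G) t -> pr Psi G t.
Proof.
  intros H1 H2. apply deduction in H1. apply deduction in H2.
  eapply pr_mp; [apply pr_thm, ax_A3|].
  apply deduction.
  assert (Hx : pr Psi (Neg t :: G) (Neg (Var n))).
  { apply deduction.
    eapply pr_mp; [apply pr_hyp; right; now left|].
    eapply pr_mp; [apply pr_weaken with (1 := H1); simpl; auto|].
    apply pr_hyp; now left. }
  eapply pr_mp; [apply pr_hyp; now left|].
  eapply pr_mp; [apply pr_weaken with (1 := H2); simpl; auto| exact Hx].
Qed.

Definition upd (v : nat -> bool) (j : nat) (b : bool) : nat -> bool :=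
  fun n => if Nat.eqb n j then b else v n.

Lemma ctx_ext v v' k : (forall n, n < k -> v n = v' n) -> ctx v k = ctx v' k.
Proof.
  induction k; simpl; intros; auto.
  unfold lit. rewrite (H k ltac:(lia)), IHk; auto.
Qed.

Lemma elim_all Psi t : forall k, (forall v, pr Psi (ctx v k) t) -> pr Psi [] t.
Proof.
  induction k; intros H.
  - exact (H (fun _ => true)).
  - apply IHk. intro v.
    apply pr_elim with (n := k).
    + specialize (H (upd v k true)). simpl in H. unfold lit in H at 1.
      replace (upd v k true k) with true in H by (unfold upd; now rewrite Nat.eqb_refl).
      rewrite (ctx_ext (upd v k true) v k) in H; auto.
      intros n Hn. unfold upd. destruct (Nat.eqb_spec n k); [lia|auto].
    + specialize (H (upd v k false)). simpl in H. unfold lit in H at 1.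
      replace (upd v k false k) with false in H by (unfold upd; now rewrite Nat.eqb_refl).
      rewrite (ctx_ext (upd v k false) v k) in H; auto.
      intros n Hn. unfold upd. destruct (Nat.eqb_spec n k); [lia|auto].
Qed.

Lemma complete Psi t : dia_free t -> (forall v, eval v t = true) -> thm Psi t.
Proof.
  intros Hd Hv. apply pr_nil. apply elim_all with (k := maxv t).
  intro v. pose proof (kalmar Psi t (maxv t) v Hd (le_n _)) as H.
  rewrite Hv in H. exact H.
Qed.

Lemma taut Psi (l : list form) t : dia_free t -> (forall v, eval v t = true) ->
  thm Psi (subst (fun n => nth n l Bot) t).
Proof. intros. apply r_US. now apply complete. Qed.

Ltac taut_tac := let v := fresh "v" in intro v; simpl; repeat (match goal with |- context [v ?n] => destruct (v n) end); reflexivity.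
Ltac tautI l t := apply (taut _ l t); [simpl; tauto | taut_tac].

Lemma imp_trans Psi a b c : thm Psi (Imp a b) -> thm Psi (Imp b c) -> thm Psi (Imp a c).
Proof.
  intros H1 H2. eapply r_MP; [eapply r_MP; [|exact H1]|exact H2].
  tautI [a;b;c] (Imp (Imp (Var 0) (Var 1)) (Imp (Imp (Var 1) (Var 2)) (Imp (Var 0) (Var 2)))).
Qed.

Lemma dnI Psi a : thm Psi (Imp a (Neg (Neg a))).
Proof. tautI [a] (Imp (Var 0) (Neg (Neg (Var 0)))). Qed.
Lemma dnE Psi a : thm Psi (Imp (Neg (Neg a)) a).
Proof. apply ax_A3. Qed.
Lemma contra Psi a b : thm Psi (Imp a b) -> thm Psi (Imp (Neg b) (Neg a)).
Proof.
  intro H. eapply r_MP; [|exact H].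
  tautI [a;b] (Imp (Imp (Var 0) (Var 1)) (Imp (Neg (Var 1)) (Neg (Var 0)))).
Qed.
Lemma contra2 Psi a b : thm Psi (Imp (Neg a) (Neg b)) -> thm Psi (Imp b a).
Proof.
  intro H. eapply r_MP; [|exact H].
  tautI [a;b] (Imp (Imp (Neg (Var 0)) (Neg (Var 1))) (Imp (Var 1) (Var 0))).
Qed.
Lemma neg_tnn Psi u : thm Psi (Imp (Neg u) (Neg (Or u Bot))).
Proof. tautI [u] (Imp (Neg (Var 0)) (Neg (Neg (Neg (Var 0))))). Qed.
Lemma iff_intro Psi a b : thm Psi (Imp a b) -> thm Psi (Imp b a) -> thm Psi (Iff a b).
Proof.
  intros H1 H2. eapply r_MP; [eapply r_MP; [|exact H1]|exact H2].
  tautI [a;b] (Imp (Imp (Var 0) (Var 1)) (Imp (Imp (Var 1) (Var 0)) (Iff (Var 0) (Var 1)))).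
Qed.
Lemma iff_trans Psi a b c : thm Psi (Iff a b) -> thm Psi (Iff b c) -> thm Psi (Iff a c).
Proof.
  intros H1 H2. eapply r_MP; [eapply r_MP; [|exact H1]|exact H2].
  tautI [a;b;c] (Imp (Iff (Var 0) (Var 1)) (Imp (Iff (Var 1) (Var 2)) (Iff (Var 0) (Var 2)))).
Qed.
Lemma iff_imp Psi a a' b b' : thm Psi (Iff a a') -> thm Psi (Iff b b') ->
  thm Psi (Iff (Imp a b) (Imp a' b')).
Proof.
  intros H1 H2. eapply r_MP; [eapply r_MP; [|exact H1]|exact H2].
  tautI [a;a';b;b'] (Imp (Iff (Var 0) (Var 1)) (Imp (Iff (Var 2) (Var 3))
     (Iff (Imp (Var 0) (Var 2)) (Imp (Var 1) (Var 3))))).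
Qed.
Lemma iff_refl Psi a : thm Psi (Iff a a).
Proof. apply iff_intro; apply thm_I. Qed.

Lemma thm_mono (Psi1 Psi2 : form -> Prop) :
  (forall a, Psi1 a -> thm Psi2 a) -> forall a, thm Psi1 a -> thm Psi2 a.
Proof.
  intros H a D. induction D.
  - auto.
  - apply ax_A1.
  - apply ax_A2.
  - apply ax_A3.
  - apply ax_K.
  - apply ax_Dbot.
  - apply ax_Dor.
  - eapply r_MP; eauto.
  - now apply r_Nec.
  - now apply r_DMon.
  - now apply r_US.
Qed.

Definition L1 := L_h_axioms 1.

Lemma L1_T x : thm L1 (Imp x (Dia x)).
Proof.
  apply (r_US _ (fun _ => x) (Imp (p 0) (Dia (p 0)))).
  apply ax_extra. left. left. reflexivity.
Qed.
Lemma L1_4 x : thm L1 (Imp (Dia (Dia (Dia x))) (Dia (Dia x))).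
Proof.
  apply (r_US _ (fun _ => x) (Imp (Dia (Dia (Dia (p 0)))) (Dia (Dia (p 0))))).
  apply ax_extra. left. right. left. reflexivity.
Qed.
Lemma L1_W x : thm L1 (Imp (Box (Box (Dia (Dia x)))) (Dia (Dia (Box (Box x))))).
Proof.
  apply (r_US _ (fun _ => x) (Imp (Box (Box (Dia (Dia (p 0))))) (Dia (Dia (Box (Box (p 0))))))).
  apply ax_extra. left. right. right. reflexivity.
Qed.
Lemma L1_B x : thm L1 (Imp x (BoxS (Or (DiaS x) Bot))).
Proof.
  apply (r_US _ (fun _ => x) (B 1)).
  apply ax_extra. right. reflexivity.
Qed.

Lemma L1_A x : thm L1 (Imp x (Dia (Dia (Box (Box x))))).
Proof.
  assert (s2 := r_DMon _ _ _ (neg_tnn L1 (DiaS x))).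
  assert (s4 := imp_trans _ _ _ _ (dnE L1 (Dia (Neg (DiaS x)))) s2).
  assert (s6 := contra _ _ _ (r_DMon _ _ _ s4)).
  exact (imp_trans _ _ _ _ (imp_trans _ _ _ _ (L1_B x) s6) (L1_W x)).
Qed.

Lemma L1_C x : thm L1 (Imp (Dia (Dia (Box (Box x)))) x).
Proof.
  assert (c1 := r_DMon _ _ _ (dnI L1 (Dia (Neg x)))).
  assert (c2 := contra _ _ _ c1).
  assert (c4 := imp_trans _ _ _ _ c2 (neg_tnn L1 (DiaS (Neg x)))).
  assert (c6 := r_DMon _ _ _ (r_DMon _ _ _ c4)).
  assert (d := contra2 _ _ _ (L1_B (Neg x))).
  exact (imp_trans _ _ _ _ c6 d).
Qed.

Lemma L1_dia_elim x : thm L1 (Imp (Dia x) x).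
Proof.
  eapply imp_trans; [|apply L1_C].
  eapply imp_trans; [apply r_DMon, L1_A| apply L1_4].
Qed.

Lemma L1_K1 : thm L1 (Iff (p 0) (Box (p 0))).
Proof.
  assert (H1 := L1_dia_elim (Neg (p 0))).
  assert (H2 := L1_T (Neg (p 0))).
  eapply r_MP; [eapply r_MP; [|exact H1]|exact H2].
  tautI [p 0; Dia (Neg (p 0))]
    (Imp (Imp (Var 1) (Neg (Var 0))) (Imp (Imp (Neg (Var 0)) (Var 1)) (Iff (Var 0) (Neg (Var 1))))).
Qed.

Lemma K1_ax x : thm K1_axioms (Iff x (Box x)).
Proof.
  apply (r_US _ (fun _ => x) (Iff (p 0) (Box (p 0)))).
  apply ax_extra. reflexivity.
Qed.

Lemma K1_dia_elim x : thm K1_axioms (Imp (Dia x) x).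
Proof.
  assert (H := K1_ax (Neg x)).
  assert (H2 : thm K1_axioms (Imp (Dia (Neg (Neg x))) x)).
  { eapply r_MP; [|exact H].
    tautI [x; Dia (Neg (Neg x))]
      (Imp (Iff (Neg (Var 0)) (Neg (Var 1))) (Imp (Var 1) (Var 0))). }
  eapply imp_trans; [apply r_DMon, dnI|exact H2].
Qed.

Lemma K1_dia_intro x : thm K1_axioms (Imp x (Dia x)).
Proof.
  assert (H := K1_ax (Neg x)).
  assert (H2 : thm K1_axioms (Imp x (Dia (Neg (Neg x))))).
  { eapply r_MP; [|exact H].
    tautI [x; Dia (Neg (Neg x))]
      (Imp (Iff (Neg (Var 0)) (Neg (Var 1))) (Imp (Var 0) (Var 1))). }
  eapply imp_trans; [exact H2|apply r_DMon, dnE].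
Qed.

Lemma K1_box_elim z : thm K1_axioms (Imp (Box z) z).
Proof.
  eapply imp_trans; [apply contra, K1_dia_intro| apply dnE].
Qed.

Lemma K1_box_intro z : thm K1_axioms (Imp z (Box z)).
Proof.
  eapply imp_trans; [apply dnI| apply contra, K1_dia_elim].
Qed.

Lemma same1 : same_logic (L_h_axioms 1) K1_axioms.
Proof.
  intro a; split; apply thm_mono; clear a; intros a Ha.
  - destruct Ha as [[H|[H|H]]|H]; subst.
    + apply K1_dia_intro.
    + apply K1_dia_elim.
    + eapply imp_trans; [apply K1_box_elim|].
      eapply imp_trans; [apply K1_box_elim|].
      eapply imp_trans; [apply K1_dia_elim|].
      eapply imp_trans; [apply K1_dia_elim|].
      eapply imp_trans; [apply K1_box_intro|].
      eapply imp_trans; [apply K1_box_intro|].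
      eapply imp_trans; [apply K1_dia_intro|].
      apply K1_dia_intro.
    + simpl.
      eapply imp_trans; [apply K1_dia_intro|].
      eapply imp_trans; [apply K1_dia_intro|].
      eapply imp_trans; [apply (dnI _ (DiaS (p 1)))|].
      eapply imp_trans; [apply (dnI _ (Or (DiaS (p 1)) Bot))|].
      apply contra.
      eapply imp_trans; [apply r_DMon, K1_dia_elim | apply K1_dia_elim].
  - unfold K1_axioms in Ha. subst. apply L1_K1.
Qed.

Fixpoint erase (a : form) : form :=
  match a with
  | Var n => Var n
  | Bot => Bot
  | Imp a b => Imp (erase a) (erase b)
  | Dia a => erase a
  end.

Lemma erase_df a : dia_free (erase a).
Proof. induction a; simpl; auto. Qed.

Lemma erase_vars k a : vars_below k a -> vars_below k (erase a).
Proof. induction a; simpl; tauto. Qed.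

Lemma erase_iff a : thm L1 (Iff a (erase a)).
Proof.
  induction a; simpl.
  - apply iff_refl.
  - apply iff_refl.
  - now apply iff_imp.
  - eapply iff_trans; [|exact IHa].
    apply iff_intro; [apply L1_dia_elim|apply L1_T].
Qed.

Definition ite (c x y : form) : form := And (Imp c x) (Imp (Neg c) y).

Fixpoint trees (k : nat) : list form :=
  match k with
  | 0 => [Bot; Top]
  | S j => flat_map (fun t1 => map (fun t0 => ite (p j) t1 t0) (trees j)) (trees j)
  end.

Lemma trees_complete : forall k (g : (nat -> bool) -> bool),
  (forall v v', (forall n, n < k -> v n = v' n) -> g v = g v') ->
  exists t, In t (trees k) /\ forall v, eval v t = g v.
Proof.
  induction k; intros g Hg.
  - destruct (g (fun _ => false)) eqn:E.
    + exists Top. split; [simpl; auto|]. intro v. rewrite (Hg v (fun _ => false)) by lia. now rewrite E.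
    + exists Bot. split; [simpl; auto|]. intro v. rewrite (Hg v (fun _ => false)) by lia. now rewrite E.
  - destruct (IHk (fun v => g (upd v k true))) as [t1 [H1 E1]].
    { intros v v' H. apply Hg. intros n Hn. unfold upd. destruct (Nat.eqb_spec n k); auto.
      apply H; lia. }
    destruct (IHk (fun v => g (upd v k false))) as [t0 [H0 E0]].
    { intros v v' H. apply Hg. intros n Hn. unfold upd. destruct (Nat.eqb_spec n k); auto.
      apply H; lia. }
    exists (ite (p k) t1 t0). split.
    + simpl. apply in_flat_map. exists t1. split; auto. apply in_map. auto.
    + intro v. simpl. rewrite E1, E0.
      assert (Hu : forall b, v k = b -> g (upd v k b) = g v).
      { intros b Hb. apply Hg. intros n _. unfold upd. destruct (Nat.eqb_spec n k); subst; auto. }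
      destruct (v k) eqn:Ev; simpl; rewrite Hu; auto;
        destruct (g v); reflexivity.
Qed.

Lemma eval_ext k a v v' : vars_below k a -> (forall n, n < k -> v n = v' n) -> eval v a = eval v' a.
Proof.
  induction a; simpl; intros; auto.
  destruct H. now rewrite IHa1, IHa2.
Qed.

Lemma eval_Iff v a b : eval v (Iff a b) = Bool.eqb (eval v a) (eval v b).
Proof. simpl. destruct (eval v a), (eval v b); reflexivity. Qed.

Lemma loctab1 : locally_tabular (L_h_axioms 1).
Proof.
  intro k. exists (trees k). intros a Ha.
  destruct (trees_complete k (fun v => eval v (erase a))) as [t [Ht Et]].
  { intros v v' H. apply (eval_ext k); auto. now apply erase_vars. }
  exists t. split; auto.
  eapply iff_trans; [apply erase_iff|].
  apply complete.
  - simpl. pose proof (erase_df a).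
    assert (dia_free t).
    { clear -Ht. revert t Ht. induction k; simpl; intros t Ht.
      - destruct Ht as [<-|[<-|[]]]; simpl; auto.
      - apply in_flat_map in Ht. destruct Ht as [t1 [H1 H2]]. apply in_map_iff in H2.
        destruct H2 as [t0 [<- H0]]. simpl. repeat split; auto. }
    tauto.
  - intro v. rewrite eval_Iff, Et. destruct (eval v (erase a)); reflexivity.
Qed.

Inductive W := WT | WH | WN (n : nat).

Definition R (x y : W) : Prop :=
  match x with
  | WT => y = WT
  | WH => True
  | WN n => y = WH \/ exists m, y = WN m /\ m <= n
  end.

Fixpoint sat (V : nat -> W -> Prop) (w : W) (a : form) : Prop :=
  match a with
  | Var n => V n w
  | Bot => False
  | Imp a b => sat V w a -> sat V w b
  | Dia a => exists y, R w y /\ sat V y a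
  end.

Lemma R_refl x : R x x.
Proof. destruct x; simpl; auto. right. exists n; auto. Qed.

Lemma R2_char x z : (exists y, R x y /\ R y z) <-> (x = WT -> z = WT).
Proof.
  split.
  - intros [y [H1 H2]] ->. simpl in H1. subst. exact H2.
  - intros H. destruct x.
    + exists WT. rewrite (H eq_refl). simpl; auto.
    + exists WH. simpl; auto.
    + exists WH. simpl; auto.
Qed.

Lemma sat_subst V s a w : sat V w (subst s a) <-> sat (fun n x => sat V x (s n)) w a.
Proof.
  revert w; induction a; simpl; intros w; try tauto.
  - rewrite IHa1, IHa2; tauto.
  - split; intros [y [Hy Hs]]; exists y; split; auto; apply IHa; auto.
Qed.

Lemma sat_DiaS V w a : sat V w (DiaS a) <-> exists z, (w = WT -> z = WT) /\ sat V z a.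
Proof.
  simpl. split.
  - intros [y [Hy [z [Hz Hs]]]]. exists z. split; auto. apply R2_char. eauto.
  - intros [z [Hz Hs]]. apply R2_char in Hz. destruct Hz as [y [H1 H2]]. eauto.
Qed.

Lemma sat_BoxS V w a : sat V w (BoxS a) <-> forall z, (w = WT -> z = WT) -> sat V z a.
Proof.
  unfold BoxS. change (sat V w (Neg (DiaS (Neg a)))) with (~ sat V w (DiaS (Neg a))).
  rewrite sat_DiaS. split.
  - intros H z Hz. apply NNPP. intro Hn. apply H. exists z. split; auto.
  - intros H [z [Hz Hn]]. apply Hn. apply H. auto.
Qed.

Lemma sat_Box V w a : sat V w (Box a) <-> forall y, R w y -> sat V y a.
Proof.
  simpl. split.
  - intros H y Hy. apply NNPP. intro Hn. apply H. eauto.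
  - intros H [y [Hy Hn]]. apply Hn. auto.
Qed.

Lemma sat_BoxBox V w a : sat V w (Box (Box a)) <-> forall z, (w = WT -> z = WT) -> sat V z a.
Proof.
  rewrite sat_Box. split.
  - intros H z Hz. apply R2_char in Hz. destruct Hz as [y [H1 H2]].
    specialize (H y H1). rewrite sat_Box in H. auto.
  - intros H y Hy. rewrite sat_Box. intros z Hz. apply H. apply R2_char. eauto.
Qed.

Lemma sound2 a : thm (L_h_axioms 2) a -> forall V w, sat V w a.
Proof.
  induction 1 as [a Ha| | | | | | | | | |s a _ IH]; intros V w.
  - destruct Ha as [[H|[H|H]]|H]; subst.
    + simpl. intro. exists w. split; auto. apply R_refl.
    + change (sat V w (DiaS (Dia (p 0))) -> sat V w (DiaS (p 0))).
      rewrite !sat_DiaS. intros [z [Hz [y [Hy Hs]]]]. exists y. split; auto.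
      intro E. subst. specialize (Hz eq_refl). subst. exact Hy.
    + change (sat V w (Box (Box (DiaS (p 0)))) -> sat V w (DiaS (Box (Box (p 0))))).
      rewrite sat_BoxBox, sat_DiaS. intros H. exists WT. split; auto.
      rewrite sat_BoxBox. intros z Hz. specialize (Hz eq_refl). subst.
      specialize (H WT (fun _ => eq_refl)). rewrite sat_DiaS in H.
      destruct H as [u [Hu Hs]]. rewrite (Hu eq_refl) in Hs. exact Hs.
    + change (V 2 w -> sat V w (BoxS (Or (DiaS (p 2)) (B 1)))).
      intro H2. rewrite sat_BoxS. intros z Hz. simpl Or.
      change (~ sat V z (DiaS (p 2)) -> sat V z (B 1)). intro Hn.
      destruct z.
      * change (V 1 WT -> sat V WT (BoxS (Or (DiaS (p 1)) Bot))). intro H1.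
        rewrite sat_BoxS. intros z Hz'. specialize (Hz' eq_refl). subst.
        change (~ sat V WT (DiaS (p 1)) -> False). intro Hn'. apply Hn'.
        rewrite sat_DiaS. exists WT. auto.
      * exfalso. apply Hn. rewrite sat_DiaS. exists w. split; auto. discriminate.
      * exfalso. apply Hn. rewrite sat_DiaS. exists w. split; auto. discriminate.
  - simpl. tauto.
  - simpl. tauto.
  - simpl. intro H. apply NNPP. exact H.
  - change (sat V w (Box (Imp a b)) -> sat V w (Box a) -> sat V w (Box b)).
    rewrite !sat_Box. intros H1 H2 y Hy. exact (H1 y Hy (H2 y Hy)).
  - simpl. intros [y [_ []]].
  - simpl. intros [y [Hy H]] Hn. exists y. split; auto. apply H. intro Ha. apply Hn. eauto.
  - simpl in IHthm1. apply IHthm1; auto.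
  - rewrite sat_Box. intros. auto.
  - simpl in *. intros [y [Hy Ha]]. exists y. split; [exact Hy|]. exact (IHthm V y Ha).
  - apply sat_subst. apply IH.
Qed.

Definition V0 (n : nat) (w : W) : Prop :=
  match w with WT => True | WH => False | WN m => Nat.even m = true end.

Definition Nf : form := Neg (Dia (Box (p 0))).
Definition litk (k : nat) : form := if Nat.even k then p 0 else Neg (p 0).
Fixpoint rho (k : nat) : form :=
  match k with
  | 0 => And Nf (p 0)
  | S j => And (And Nf (litk (S j))) (Dia (rho j))
  end.

Lemma rho_vars k : vars_below 1 (rho k).
Proof.
  induction k; simpl; unfold litk; repeat split; auto;
    try (destruct (Nat.even (S k)); simpl; auto).
Qed.

Lemma sat_And V w a b : sat V w (And a b) <-> sat V w a /\ sat V w b.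
Proof. simpl. split; [intro H; split; apply NNPP; tauto | tauto]. Qed.

Lemma sat_Nf w : sat V0 w Nf <-> exists n, w = WN n.
Proof.
  unfold Nf. change (sat V0 w (Neg (Dia (Box (p 0))))) with (~ sat V0 w (Dia (Box (p 0)))).
  split.
  - intro H. destruct w; eauto; exfalso; apply H; exists WT; (split; [simpl; auto|]);
      apply sat_Box; intros y Hy; simpl in Hy; subst; simpl; auto.
  - intros [n ->] [y [Hy Hb]]. rewrite sat_Box in Hb.
    specialize (Hb WH). destruct Hy as [->|[m [-> _]]]; simpl in Hb; apply Hb; simpl; auto.
Qed.

Lemma even_S n : Nat.even (S n) = negb (Nat.even n).
Proof. induction n; auto. change (Nat.even (S (S n))) with (Nat.even n). rewrite IHn. now destruct (Nat.even n). Qed.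

Lemma rho_sem k w : sat V0 w (rho k) <-> exists n, w = WN n /\ k <= n /\ Nat.even n = Nat.even k.
Proof.
  revert w; induction k; intro w.
  - simpl rho. rewrite sat_And, sat_Nf. split.
    + intros [[n ->] H]. exists n. simpl in H. repeat split; auto; lia.
    + intros [n [-> [_ H]]]. split; eauto.
  - simpl rho. rewrite !sat_And, sat_Nf. split.
    + intros [[[n ->] Hl] [y [Hy Hr]]]. apply IHk in Hr. destruct Hr as [m [-> [Hkm Hem]]].
      destruct Hy as [Hy|[m' [Hm' Hle]]]; [discriminate|]. injection Hm' as <-.
      unfold litk in Hl. rewrite even_S in Hl |- *.
      assert (Hn : Nat.even n = negb (Nat.even k)).
      { destruct (Nat.even k); simpl in Hl;
          [destruct (Nat.even n); [exfalso; auto| reflexivity] | exact Hl]. }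
      exists n. split; auto. split; auto.
      assert (m <> n). { intro; subst. rewrite Hem in Hn. destruct (Nat.even k); discriminate. }
      lia.
    + intros [n [-> [Hk He]]]. split; [split; [eauto|]|].
      * unfold litk. destruct (Nat.even (S k)) eqn:E; simpl; [exact He|].
        intro H. congruence.
      * exists (WN (pred n)). split.
        -- simpl. right. exists (pred n). split; auto; lia.
        -- apply IHk. exists (pred n). repeat split; [lia|].
           destruct n; [lia|]. simpl pred. rewrite even_S in He.
           rewrite even_S in He. destruct (Nat.even n), (Nat.even k); simpl in *; congruence.
Qed.

Lemma sound_iff a b : thm (L_h_axioms 2) (Iff a b) -> forall w, sat V0 w a <-> sat V0 w b.
Proof.
  intros H w. pose proof (sound2 _ H V0 w) as S. unfold Iff in S. rewrite sat_And in S.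
  simpl in S. tauto.
Qed.

Lemma not_tab2 : ~ k_tabular (L_h_axioms 2) 1.
Proof.
  intros [reps Hr].
  assert (Hrep : forall k, exists b, In b reps /\ forall w, sat V0 w b <-> sat V0 w (rho k)).
  { intro k. destruct (Hr (rho k) (rho_vars k)) as [b [Hb Hi]]. exists b. split; auto.
    intro w. symmetry. apply sound_iff; auto. }
  assert (Hdist : forall i j, i < j -> ~ (forall w, sat V0 w (rho i) <-> sat V0 w (rho j))).
  { intros i j Hij H. specialize (H (WN i)). rewrite !rho_sem in H.
    destruct H as [H _]. destruct H as [n [E [Hle _]]]; [exists i; auto|].
    injection E as <-. lia. }
  assert (Hl : forall n, exists l, NoDup l /\ incl l reps /\ length l = n /\
     forall b, In b l -> exists i, i < n /\ forall w, sat V0 w b <-> sat V0 w (rho i)).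
  { induction n.
    - exists []. split; [constructor|]. split; [intros x []|]. split; [reflexivity|]. intros b [].
    - destruct IHn as [l [Hnd [Hinc [Hlen Hsem]]]].
      destruct (Hrep n) as [b [Hb Hbs]].
      exists (b :: l). repeat split.
      + constructor; auto. intro Hin. destruct (Hsem b Hin) as [i [Hi Hbi]].
        apply (Hdist i n Hi). intro w. rewrite <- Hbi, Hbs. tauto.
      + intros x [<-|Hx]; auto.
      + simpl. now rewrite Hlen.
      + intros x [<-|Hx].
        * exists n. split; auto.
        * destruct (Hsem x Hx) as [i [Hi Hxi]]. exists i. split; auto. }
  destruct (Hl (S (length reps))) as [l [Hnd [Hinc [Hlen _]]]].
  pose proof (NoDup_incl_length Hnd Hinc). lia.
Qed.

Theorem mainTheorem11 :
  same_logic (L_h_axioms 1) K1_axioms /\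
  locally_tabular (L_h_axioms 1) /\
  ~ k_tabular (L_h_axioms 2) 1.
Proof.
  split; [exact same1|]. split; [exact loctab1| exact not_tab2].
Qed.
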